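(* Let $(X,\sigma_X)$, $(Y,\sigma_Y)$ be one-sided subshifts, $\pi:X\to Y$ a one-block factor map, $X$ with the specification property, and $\mathcal F=\{\log f_n\}$ an almost additive potential on $X$ with bounded variation. For $i_1\cdots i_n\in B_n(Y)$ let $a_{i_1\cdots i_n}=\tilde g_n(y)$ for $y\in[i_1\cdots i_n]$ (well defined since $\tilde g_n$ depends only on $y_1,\dots,y_n$), and $S_n=\sum_{i_1\cdots i_n\in B_n(Y)}a_{i_1\cdots i_n}$. Then there exist $K_1,K_2>0$ such that $K_1\le e^{nP_Y(\tilde{\mathcal G})}/S_n\le K_2$ for all $n\in\mathbb N$.
   Context: Subshifts: one-sided closed shift-invariant subsets of $\{1,\dots,k\}^{\mathbb N}$; $B_n(Y)$ allowed words of length $n$. Specification: $\exists p>0$ such that for all allowable $u,v$ there is $w$ of length $p$ with $uwv$ allowable. Factor map: continuous surjection commuting with shifts, one-block. Almost additive: $\exists C>0$, $e^{-C}f_n(x)f_m(\sigma^nx)\le f_{n+m}(x)\le e^Cf_n(x)f_m(\sigma^nx)$; bounded variation: $\sup_n\sup\{f_n(x)/f_n(x'):x_i=x'_i,1\le i\le n\}<\infty$. $E_n(y)$: any set with exactly one point from each cylinder $[x_1\cdots x_n]$ of $X$ with $\pi([x_1\cdots x_n])\subseteq[y_1\cdots y_n]$; $g_n(y)=\sup_{E_n(y)}\sum_{x\in E_n(y)}f_n(x)$; $\tilde g_n=g_ne^{-nP_X(\mathcal F)}$; $\tilde{\mathcal G}=\{\log\tilde g_n\}$; $P_Y(\tilde{\mathcal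 G})=\lim_{\epsilon\to0}\limsup_n\frac1n\log\sup_E\sum_{y\in E}\tilde g_n(y)$ over $(n,\epsilon)$-separated sets. *)

(* Defs.v *)
From Stdlib Require Import Reals Lra Lia List Classical ClassicalEpsilon.
Import ListNotations.
Open Scope R_scope.

(* Points of the full shift: sequences x : nat -> nat, with x 0 playing the
   role of the paper's x_1.  Letters are 1..k. *)
Definition pt := nat -> nat.

Definition shift (x : pt) : pt := fun i => x (S i).
Definition shiftn (n : nat) (x : pt) : pt := Nat.iter n shift x.

Definition prefix (n : nat) (x : pt) : list nat := map x (seq 0 n).

Fixpoint words (k n : nat) : list (list nat) :=
  match n with
  | O => [ [] ]
  | S m => flat_map (fun a => map (cons a) (words k m)) (seq 1 k)
  end.

Definition Subshift (k : nat) (X : pt -> Prop) : Prop :=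
  (exists x, X x) /\
  (forall x, X x -> forall i, (1 <= x i <= k)%nat) /\
  (forall x, X x -> X (shift x)) /\
  (forall x, (forall n, exists z, X z /\ prefix n z = prefix n x) -> X x).

Definition Allowed (X : pt -> Prop) (u : list nat) : Prop :=
  exists x, X x /\ prefix (length u) x = u.

Definition Specification (X : pt -> Prop) : Prop :=
  exists p : nat, (0 < p)%nat /\
    forall u v, Allowed X u -> Allowed X v ->
      exists w, length w = p /\ Allowed X (u ++ w ++ v).

Definition blockmap (Phi : nat -> nat) (x : pt) : pt := fun i => Phi (x i).

(* pi = blockmap Phi is a factor map X -> Y (continuity and commuting with
   the shift are automatic for one-block maps) *)
Definition OneBlockFactor (X Y : pt -> Prop) (Phi : nat -> nat) : Prop :=
  (forall x, X x -> Y (blockmap Phi x)) /\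
  (forall y, Y y -> exists x, X x /\ blockmap Phi x = y).

Definition Potential (X : pt -> Prop) (f : nat -> pt -> R) : Prop :=
  forall n x, X x ->
    0 < f n x /\
    (forall e, 0 < e -> exists N, forall x', X x' -> prefix N x' = prefix N x ->
        Rabs (f n x' - f n x) < e).

Definition AlmostAdditive (X : pt -> Prop) (f : nat -> pt -> R) : Prop :=
  exists C, 0 < C /\
    forall x, X x -> forall n m, (1 <= n)%nat -> (1 <= m)%nat ->
      exp (- C) * f n x * f m (shiftn n x) <= f (n + m)%nat x /\
      f (n + m)%nat x <= exp C * f n x * f m (shiftn n x).

Definition BoundedVariation (X : pt -> Prop) (f : nat -> pt -> R) : Prop :=
  exists M, forall n, (1 <= n)%nat -> forall x x', X x -> X x' ->
    prefix n x = prefix n x' -> f n x <= M * f n x'.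

(* supremum of a set of reals (used only for nonempty bounded sets) *)
Definition Rsup (S : R -> Prop) : R :=
  epsilon (inhabits 0) (fun l => is_lub S l).

(* metric d(x,y) = (1/2)^(first index where x,y differ), 0 if x = y *)
Definition dist (x y : pt) : R :=
  Rsup (fun r => r = 0 \/ exists i, x i <> y i /\ r = (/2) ^ i).

(* d_n(x,y) = max_{0<=i<n} d(sigma^i x, sigma^i y) > eps *)
Definition Separated (n : nat) (eps : R) (x y : pt) : Prop :=
  exists i, (i < n)%nat /\ eps < dist (shiftn i x) (shiftn i y).

Definition SepSet (X : pt -> Prop) (n : nat) (eps : R) (E : list pt) : Prop :=
  NoDup E /\ (forall x, In x E -> X x) /\
  (forall x y, In x E -> In y E -> x <> y -> Separated n eps x y).

Definition sumR {A : Type} (g : A -> R) (l : list A) : R :=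
  fold_right (fun a acc => g a + acc) 0 l.

Definition Zsum (X : pt -> Prop) (g : nat -> pt -> R) (n : nat) (eps : R) : R :=
  Rsup (fun s => exists E, SepSet X n eps E /\ s = sumR (g n) E).

Definition IsLimsup (u : nat -> R) (L : R) : Prop :=
  forall d, 0 < d ->
    (forall N, exists n, (N <= n)%nat /\ L - d < u n) /\
    (exists N, forall n, (N <= n)%nat -> u n < L + d).

(* P = lim_{eps -> 0} limsup_n (1/n) log Zsum X g n eps *)
Definition Pressure (X : pt -> Prop) (g : nat -> pt -> R) (P : R) : Prop :=
  forall d, 0 < d -> exists eta, 0 < eta /\
    forall eps, 0 < eps < eta ->
      exists L, IsLimsup (fun n => ln (Zsum X g n eps) / INR n) L /\
                Rabs (L - P) < d.

Definition ind (P : Prop) (r : R) : R :=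
  if excluded_middle_informative P then r else 0.

Definition Wset (X : pt -> Prop) (Phi : nat -> nat) (n : nat) (w : list nat)
  (u : list nat) : Prop :=
  Allowed X u /\ length u = n /\
  (forall x, X x -> prefix n x = u -> prefix n (blockmap Phi x) = w).

(* g_n(y), as a function of the word y_1...y_n: sup over E_n(y) (one point
   c u chosen in each such cylinder [u]) of sum_{x in E_n(y)} f_n(x). *)
Definition gword (k : nat) (X : pt -> Prop) (Phi : nat -> nat)
  (f : nat -> pt -> R) (n : nat) (w : list nat) : R :=
  Rsup (fun s => exists c : list nat -> pt,
    (forall u, Wset X Phi n w u -> X (c u) /\ prefix n (c u) = u) /\
    s = sumR (fun u => ind (Wset X Phi n w u) (f n (c u))) (words k n)).

Definition gtilde (k : nat) (X : pt -> Prop) (Phi : nat -> nat)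
  (f : nat -> pt -> R) (PX : R) (n : nat) (y : pt) : R :=
  gword k X Phi f n (prefix n y) * exp (- (INR n * PX)).

Definition Ssum (k l : nat) (X Y : pt -> Prop) (Phi : nat -> nat)
  (f : nat -> pt -> R) (PX : R) (n : nat) : R :=
  sumR (fun w => ind (Allowed Y w) (gword k X Phi f n w * exp (- (INR n * PX))))
       (words l n).

(* Main.v *)
Require Import Defs.
From Stdlib Require Import Reals List.
From Stdlib Require Import Lra Lia Classical ClassicalEpsilon FunctionalExtensionality.
Import ListNotations.
Import Defs.
Open Scope R_scope.


Lemma ind_T (P : Prop) r : P -> ind P r = r.
Proof. intro H; unfold ind; destruct excluded_middle_informative; tauto. Qed.
Lemma ind_F (P : Prop) r : ~ P -> ind P r = 0.
Proof. intro H; unfold ind; destruct excluded_middle_informative; tauto. Qed.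
Lemma ind_nonneg (P : Prop) r : (P -> 0 <= r) -> 0 <= ind P r.
Proof. intro H; unfold ind; destruct excluded_middle_informative; auto; lra. Qed.

Lemma sumR_nil {A} (g : A -> R) : sumR g [] = 0.
Proof. reflexivity. Qed.
Lemma sumR_cons {A} (g : A -> R) a l : sumR g (a :: l) = g a + sumR g l.
Proof. reflexivity. Qed.
Lemma sumR_app {A} (g : A -> R) l1 l2 : sumR g (l1 ++ l2) = sumR g l1 + sumR g l2.
Proof. induction l1; simpl; [lra|rewrite IHl1; lra]. Qed.
Lemma sumR_ext_in {A} (g h : A -> R) l : (forall a, In a l -> g a = h a) -> sumR g l = sumR h l.
Proof. induction l; simpl; intros H; auto. rewrite H, IHl; auto. Qed.
Lemma sumR_le_in {A} (g h : A -> R) l : (forall a, In a l -> g a <= h a) -> sumR g l <= sumR h l.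
Proof. induction l; simpl; intros H; [lra|]. specialize (IHl (fun a0 h0 => H a0 (or_intror h0))). specialize (H a (or_introl eq_refl)). lra. Qed.
Lemma sumR_nonneg {A} (g : A -> R) l : (forall a, In a l -> 0 <= g a) -> 0 <= sumR g l.
Proof. intro H. replace 0 with (sumR (fun _ => 0) l). apply sumR_le_in; auto.
  induction l; simpl; auto. rewrite IHl; auto with datatypes; lra. Qed.
Lemma sumR_plus {A} (g h : A -> R) l : sumR (fun a => g a + h a) l = sumR g l + sumR h l.
Proof. induction l; simpl; lra. Qed.
Lemma sumR_scal {A} (g : A -> R) c l : sumR (fun a => c * g a) l = c * sumR g l.
Proof. induction l; simpl; [lra|rewrite IHl; lra]. Qed.
Lemma sumR_const {A} c (l : list A) : sumR (fun _ => c) l = c * INR (length l).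
Proof. induction l; simpl length; [simpl; lra|]. rewrite sumR_cons, IHl, S_INR. lra. Qed.
Lemma sumR_map {A B} (g : B -> R) (p : A -> B) l : sumR g (map p l) = sumR (fun a => g (p a)) l.
Proof. induction l; simpl; auto. rewrite IHl; auto. Qed.
Lemma sumR_flat_map {A B} (g : B -> R) (F : A -> list B) l :
  sumR g (flat_map F l) = sumR (fun a => sumR g (F a)) l.
Proof. induction l; simpl; auto. rewrite sumR_app, IHl; auto. Qed.
Lemma sumR_swap {A B} (F : A -> B -> R) l1 l2 :
  sumR (fun a => sumR (fun b => F a b) l2) l1 = sumR (fun b => sumR (fun a => F a b) l1) l2.
Proof. induction l1; simpl.
  - induction l2; simpl; auto. rewrite <- IHl2; lra.
  - rewrite IHl1, <- sumR_plus. auto. Qed.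
Lemma sumR_prod {A B} (g : A -> R) (h : B -> R) l1 l2 :
  sumR (fun a => sumR (fun b => g a * h b) l2) l1 = sumR g l1 * sumR h l2.
Proof. induction l1; simpl; [lra|]. rewrite sumR_scal, IHl1. lra. Qed.
Lemma sumR_ge_term {A} (g : A -> R) l a : (forall b, In b l -> 0 <= g b) -> In a l -> g a <= sumR g l.
Proof. induction l; simpl; intros H Ha; [tauto|]. destruct Ha as [<-|Ha].
  - assert (0 <= sumR g l) by (apply sumR_nonneg; auto). lra.
  - assert (0 <= g a0) by auto. assert (g a <= sumR g l) by auto. lra. Qed.

Lemma sumR_perm_cons {A} (g : A -> R) a l1 l2 : sumR g (l1 ++ a :: l2) = g a + sumR g (l1 ++ l2).
Proof. rewrite !sumR_app; simpl; lra. Qed.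
Lemma sumR_incl {A} (g : A -> R) l1 l2 : NoDup l1 -> incl l1 l2 -> (forall b, In b l2 -> 0 <= g b) ->
  sumR g l1 <= sumR g l2.
Proof. revert l2; induction l1 as [|a l1 IH]; intros l2 Hn Hi Hg; simpl.
  - apply sumR_nonneg; auto.
  - inversion Hn; subst. assert (Ha : In a l2) by (apply Hi; simpl; auto).
    destruct (in_split _ _ Ha) as [p [q ->]]. rewrite sumR_perm_cons.
    assert (sumR g l1 <= sumR g (p ++ q)); [|lra].
    apply IH; auto.
    + intros b Hb. assert (In b (p ++ a :: q)) by (apply Hi; simpl; auto).
      apply in_app_or in H. apply in_or_app. destruct H as [H|[H|H]]; auto. subst; tauto.
    + intros b Hb; apply Hg. apply in_app_or in Hb; apply in_or_app; simpl; tauto. Qed.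

Lemma sumR_unique {A} (Q : A -> Prop) c w0 (L : list A) : NoDup L -> (forall w, Q w -> w = w0) ->
  (Q w0 -> In w0 L) -> sumR (fun w => ind (Q w) c) L = ind (Q w0) c.
Proof. intros Hn Hu Hi. destruct (classic (Q w0)) as [Hq|Hq].
  - specialize (Hi Hq). rewrite (ind_T _ _ Hq). destruct (in_split _ _ Hi) as [p [q ->]].
    rewrite sumR_perm_cons, (ind_T _ _ Hq). apply NoDup_remove_2 in Hn.
    rewrite (sumR_ext_in _ (fun _ => 0)). rewrite sumR_const; lra.
    intros a Ha. apply ind_F. intro Hqa. apply Hu in Hqa; subst; tauto.
  - rewrite (ind_F _ _ Hq). rewrite (sumR_ext_in _ (fun _ => 0)). rewrite sumR_const; lra.
    intros a Ha. apply ind_F. intro Hqa. pose proof (Hu _ Hqa); subst; tauto. Qed.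

Lemma pos_min {A} (P : A -> Prop) (g : A -> R) l : (forall a, In a l -> P a -> 0 < g a) ->
  exists d, 0 < d /\ forall a, In a l -> P a -> d <= g a.
Proof. induction l as [|a l IH]; intros H.
  - exists 1; split; [lra|]; intros a []. 
  - destruct IH as [d [Hd Hd']]. intros; apply H; simpl; auto.
    destruct (classic (P a)) as [Pa|Pa].
    + assert (0 < g a) by (apply H; simpl; auto). exists (Rmin d (g a)); split.
      apply Rmin_pos; auto. intros b [<-|Hb] Pb. apply Rmin_r. eapply Rle_trans; [apply Rmin_l|]; auto.
    + exists d; split; auto. intros b [<-|Hb] Pb; [tauto|auto]. Qed.

Lemma Rsup_lub (S : R -> Prop) : (exists x, S x) -> (exists B, forall x, S x -> x <= B) -> is_lub S (Rsup S).
Proof. intros [x Hx] [B HB]. unfold Rsup. apply epsilon_spec.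
  destruct (completeness S) as [l Hl]. exists B; intros y Hy; apply HB; auto. exists x; auto.
  exists l; auto. Qed.


Lemma shiftn_S x n : shiftn (S n) x = shiftn n (shift x).
Proof. revert x; induction n; intros x; auto. change (shiftn (S (S n)) x) with (shift (shiftn (S n) x)).
  rewrite IHn. reflexivity. Qed.
Lemma shiftn_val n x i : shiftn n x i = x (n + i)%nat.
Proof. revert x i; induction n; intros x i; auto. rewrite shiftn_S, IHn. reflexivity. Qed.
Lemma shiftn_add n m x : shiftn m (shiftn n x) = shiftn (n + m) x.
Proof. apply functional_extensionality; intro i. rewrite !shiftn_val. f_equal; lia. Qed.

Lemma prefix_S n x : prefix (S n) x = x 0%nat :: prefix n (shift x).
Proof. unfold prefix. simpl. f_equal. rewrite <- seq_shift, map_map. reflexivity. Qed.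
Lemma prefix_length n x : length (prefix n x) = n.
Proof. unfold prefix; rewrite length_map, length_seq; auto. Qed.
Lemma prefix_app n m x : prefix (n + m) x = prefix n x ++ prefix m (shiftn n x).
Proof. revert x; induction n; intros x; auto. simpl plus. rewrite !prefix_S, IHn, shiftn_S. reflexivity. Qed.
Lemma prefix_nth n x i : (i < n)%nat -> nth i (prefix n x) 0%nat = x i.
Proof. intro H. unfold prefix. rewrite nth_indep with (d' := x 0%nat) by (rewrite length_map, length_seq; auto).
  rewrite map_nth, seq_nth; auto. Qed.
Lemma prefix_eq_pt n x y : prefix n x = prefix n y -> forall i, (i < n)%nat -> x i = y i.
Proof. intros H i Hi. rewrite <- (prefix_nth n x i Hi), <- (prefix_nth n y i Hi), H; auto. Qed.
Lemma prefix_blockmap Phi n x : prefix n (blockmap Phi x) = map Phi (prefix n x).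
Proof. unfold prefix, blockmap. rewrite map_map; auto. Qed.

Lemma app_inv_len {A} (l1 l2 l3 l4 : list A) : l1 ++ l2 = l3 ++ l4 -> length l1 = length l3 -> l1 = l3 /\ l2 = l4.
Proof. revert l3; induction l1; intros [|b l3] H Hl; simpl in *; try discriminate; auto.
  injection H; intros H1 ->. destruct (IHl1 l3 H1) as [-> ->]; auto. Qed.

Lemma in_words a n u : In u (words a n) <-> length u = n /\ Forall (fun c => (1 <= c <= a)%nat) u.
Proof. revert u; induction n; intros u; simpl.
  - split. intros [<-|[]]; auto. intros [H _]; destruct u; simpl in *; auto; discriminate.
  - rewrite in_flat_map. split.
    + intros [c [Hc Hu]]. apply in_map_iff in Hu. destruct Hu as [v [<- Hv]]. apply IHn in Hv.
      apply in_seq in Hc. simpl. destruct Hv; split; auto. constructor; auto; lia.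
    + intros [Hl HF]. destruct u as [|c v]; simpl in Hl; [discriminate|]. inversion HF; subst.
      exists c; split. apply in_seq; lia. apply in_map. apply IHn; split; auto. Qed.

Lemma NoDup_words a n : NoDup (words a n).
Proof. induction n; simpl. constructor; auto; constructor.
  generalize (seq_NoDup a 1). generalize (seq 1 a). induction l; intros Hn; simpl; [constructor|].
  inversion Hn; subst. apply NoDup_app; auto.
  - apply NoDup_map_NoDup_ForallPairs; auto. intros x y _ _ H; injection H; auto.
  - intros u Hu Hu'. apply in_map_iff in Hu. destruct Hu as [v [<- _]]. apply in_flat_map in Hu'.
    destruct Hu' as [c [Hc Hc']]. apply in_map_iff in Hc'. destruct Hc' as [w [Hw _]]. injection Hw; intros; subst; tauto.
Qed.


Lemma sumR_words_split a n m (g : list nat -> R) :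
  sumR g (words a (n + m)) = sumR (fun u => sumR (fun v => g (u ++ v)) (words a m)) (words a n).
Proof. revert g; induction n; intros g.
  - change (words a 0) with [@nil nat]; rewrite sumR_cons, sumR_nil, Rplus_0_r; reflexivity.
  - change (words a (S n + m)) with (flat_map (fun c => map (cons c) (words a (n + m))) (seq 1 a)).
    change (words a (S n)) with (flat_map (fun c => map (cons c) (words a n)) (seq 1 a)).
    rewrite !sumR_flat_map. apply sumR_ext_in; intros c _. rewrite !sumR_map. apply (IHn (fun u => g (c :: u))). Qed.

Lemma sub_prefix_words k X n x : Subshift k X -> X x -> In (prefix n x) (words k n).
Proof. intros [_ [HX _]] Hx. apply in_words. split. apply prefix_length.
  unfold prefix. apply Forall_forall. intros c Hc. apply in_map_iff in Hc. destruct Hc as [i [<- _]]. apply HX; auto. Qed.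
Lemma sub_shiftn k X n x : Subshift k X -> X x -> X (shiftn n x).
Proof. intros [_ [_ [HSh _]]] Hx. induction n; auto. simpl. apply HSh; auto. Qed.
Lemma allowed_app X u v : Allowed X (u ++ v) -> Allowed X u.
Proof. intros [x [Hx Hp]]. exists x; split; auto. rewrite length_app, prefix_app in Hp.
  apply app_inv_len in Hp; [tauto|]. apply prefix_length. Qed.
Lemma allowed_words k X u : Subshift k X -> Allowed X u -> In u (words k (length u)).
Proof. intros HS [x [Hx Hp]]. rewrite <- Hp at 1. eapply sub_prefix_words; eauto. Qed.
Lemma allowed_prefix X n x : X x -> Allowed X (prefix n x).
Proof. intros Hx; exists x; split; auto. rewrite prefix_length; auto. Qed.

Definition rep (X : pt -> Prop) (u : list nat) : pt :=
  epsilon (inhabits (fun _ => 0%nat)) (fun x => X x /\ prefix (length u) x = u).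
Lemma rep_spec X u : Allowed X u -> X (rep X u) /\ prefix (length u) (rep X u) = u.
Proof. intro H. unfold rep. apply epsilon_spec. exact H. Qed.
Lemma rep_prefix X n x : X x -> X (rep X (prefix n x)) /\ prefix n (rep X (prefix n x)) = prefix n x.
Proof. intro Hx. destruct (rep_spec X (prefix n x)) as [H1 H2]. apply allowed_prefix; auto.
  rewrite prefix_length in H2; auto. Qed.

Lemma pow_le1 x n : 0 <= x <= 1 -> x ^ n <= 1.
Proof. intro H; induction n; simpl; [lra|]. assert (0 <= x ^ n) by (apply pow_le; lra). nra. Qed.
Lemma dist_lub x y : is_lub (fun r => r = 0 \/ exists i, x i <> y i /\ r = (/2) ^ i) (dist x y).
Proof. unfold dist. apply Rsup_lub. exists 0; auto. exists 1. intros r [->|[i [_ ->]]]. lra.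
  apply pow_le1. lra. Qed.
Lemma dist_ge1 x y : x 0%nat <> y 0%nat -> 1 <= dist x y.
Proof. intro H. destruct (dist_lub x y) as [H1 _]. apply H1. right. exists 0%nat; split; auto. Qed.
Lemma dist_le x y j : (forall t, (t < j)%nat -> x t = y t) -> dist x y <= (/2) ^ j.
Proof. intro H. destruct (dist_lub x y) as [_ H2]. apply H2. intros r [->|[i [Hi ->]]].
  apply pow_le; lra.
  assert (j <= i)%nat. { destruct (Nat.lt_ge_cases i j); auto. exfalso; apply Hi, H; auto. }
  replace i with (j + (i - j))%nat by lia. rewrite pow_add.
  assert (0 <= (/2)^j) by (apply pow_le; lra). assert ((/2)^(i-j) <= 1) by (apply pow_le1; lra).
  nra. Qed.

Lemma sep_prefix n eps j x y : (/2) ^ j <= eps -> Separated n eps x y -> prefix (n + j) x <> prefix (n + j) y.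
Proof. intros Hj [i [Hi He]] Hp. assert (dist (shiftn i x) (shiftn i y) <= (/2)^j); [|lra].
  apply dist_le. intros t Ht. rewrite !shiftn_val. apply (prefix_eq_pt _ _ _ Hp). lia. Qed.

Lemma prefix_neq_sep n eps x y : eps < 1 -> prefix n x <> prefix n y -> Separated n eps x y.
Proof. intros He Hn. destruct (classic (exists i, (i < n)%nat /\ x i <> y i)) as [[i [Hi Hxy]]|Hc].
  - exists i; split; auto. eapply Rlt_le_trans; [exact He|]. apply dist_ge1. rewrite !shiftn_val.
    rewrite Nat.add_0_r; auto.
  - exfalso; apply Hn. unfold prefix. apply map_ext_in. intros i Hi. apply in_seq in Hi.
    apply NNPP; intro; apply Hc; exists i; split; auto; lia. Qed.


Lemma firstn_app_len {A} (l1 l2 : list A) n : length l1 = n -> firstn n (l1 ++ l2) = l1.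
Proof. intro H. rewrite firstn_app, H, Nat.sub_diag, firstn_O, app_nil_r. rewrite <- H. apply firstn_all. Qed.

Definition E0 (Z : pt -> Prop) (L : list (list nat)) : list pt :=
  flat_map (fun u => if excluded_middle_informative (Allowed Z u) then [rep Z u] else []) L.

Lemma in_E0 Z L x : In x (E0 Z L) -> exists u, In u L /\ Allowed Z u /\ x = rep Z u.
Proof. unfold E0. intro H. apply in_flat_map in H. destruct H as [u [Hu Hx]].
  destruct excluded_middle_informative as [Ha|]; simpl in Hx; [|tauto]. destruct Hx as [<-|[]]. eauto. Qed.

Lemma NoDup_E0 Z n L : NoDup L -> (forall u, In u L -> length u = n) -> NoDup (E0 Z L).
Proof. induction L as [|a L IH]; intros Hn Hl; simpl; [constructor|]. inversion Hn; subst.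
  unfold E0 at 1; simpl. fold (E0 Z L).
  destruct excluded_middle_informative as [Ha|Ha]; simpl; [|apply IH; auto with datatypes].
  constructor; [|apply IH; auto with datatypes].
  intro Hin. apply in_E0 in Hin. destruct Hin as [v [Hv [Hav Hx]]].
  destruct (rep_spec Z a Ha) as [_ Hr1]. destruct (rep_spec Z v Hav) as [_ Hr2].
  rewrite Hl in Hr1 by auto with datatypes. rewrite Hl in Hr2 by auto with datatypes.
  rewrite Hx in Hr1. rewrite Hr1 in Hr2. subst. rewrite Hr2 in H1. contradiction. Qed.

Lemma zsum_bounds a Z h M n eps j :
  0 <= M -> Subshift a Z -> (forall x, Z x -> 0 <= h n x) ->
  (forall x, Z x -> h n x <= M * h n (rep Z (prefix n x))) ->
  0 < eps < 1 -> (/2) ^ j <= eps ->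
  sumR (fun u => ind (Allowed Z u) (h n (rep Z u))) (words a n) <= Zsum Z h n eps /\
  Zsum Z h n eps <= M * INR (length (words a j)) * sumR (fun u => ind (Allowed Z u) (h n (rep Z u))) (words a n).
Proof.
  intros HM0 HS Hh HM He Hj.
  set (H := fun u => h n (rep Z u)).
  set (Zp := sumR (fun u => ind (Allowed Z u) (H u)) (words a n)).
  assert (Hind : forall u, 0 <= ind (Allowed Z u) (H u)).
  { intro u. apply ind_nonneg. intro Ha. apply Hh, rep_spec, Ha. }
  assert (Hup : forall E, SepSet Z n eps E -> sumR (h n) E <= M * INR (length (words a j)) * Zp).
  { intros E [HnE [HZE HsE]].
    set (g := fun v => ind (Allowed Z v) (H (firstn n v))).
    assert (HgE : sumR (fun x => H (prefix n x)) E = sumR g (map (prefix (n + j)) E)).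
    { rewrite sumR_map. apply sumR_ext_in. intros x Hx. unfold g.
      rewrite ind_T by (apply allowed_prefix; auto). rewrite prefix_app, firstn_app_len; auto.
      apply prefix_length. }
    assert (Hinc : sumR g (map (prefix (n + j)) E) <= sumR g (words a (n + j))).
    { apply sumR_incl.
      - apply NoDup_map_NoDup_ForallPairs; auto. intros x y Hx Hy Hp.
        destruct (classic (x = y)) as [|Hxy]; auto. exfalso.
        eapply sep_prefix; eauto.
      - intros v Hv. apply in_map_iff in Hv. destruct Hv as [x [<- Hx]]. eapply sub_prefix_words; eauto.
      - intros b _. unfold g. apply ind_nonneg. intro Hb.
        apply Hh, rep_spec. apply (allowed_app _ _ (skipn n b)). rewrite firstn_skipn; auto. }
    assert (Hsplit : sumR g (words a (n + j)) <= INR (length (words a j)) * Zp).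
    { rewrite sumR_words_split. unfold Zp. rewrite <- sumR_scal. apply sumR_le_in. intros u Hu.
      apply in_words in Hu. destruct Hu as [Hlu _].
      rewrite Rmult_comm, <- sumR_const. apply sumR_le_in. intros v _. unfold g. rewrite firstn_app_len by auto.
      destruct (classic (Allowed Z (u ++ v))) as [Hav|Hav].
      - rewrite !ind_T; auto. lra. eapply allowed_app; eauto.
      - rewrite ind_F by auto. apply Hind. }
    apply Rle_trans with (sumR (fun x => M * H (prefix n x)) E).
    { apply sumR_le_in. intros x Hx. apply HM; auto. }
    rewrite sumR_scal, HgE. rewrite Rmult_assoc. apply Rmult_le_compat_l; auto. eapply Rle_trans; [exact Hinc|exact Hsplit]. }
  assert (HZp : Zp = sumR (h n) (E0 Z (words a n))).
  { unfold E0. rewrite sumR_flat_map. apply sumR_ext_in. intros u _. unfold ind.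
    destruct excluded_middle_informative; simpl; unfold H; lra. }
  assert (HSep : SepSet Z n eps (E0 Z (words a n))).
  { split; [|split].
    - apply (NoDup_E0 Z n). apply NoDup_words. intros u Hu; apply in_words in Hu; tauto.
    - intros x Hx. apply in_E0 in Hx. destruct Hx as [u [_ [Hu ->]]]. apply rep_spec; auto.
    - intros x y Hx Hy Hxy. apply in_E0 in Hx. apply in_E0 in Hy.
      destruct Hx as [u [Hu [Hau ->]]]. destruct Hy as [v [Hv [Hav ->]]].
      apply prefix_neq_sep. lra.
      apply in_words in Hu. apply in_words in Hv.
      destruct (rep_spec Z u Hau) as [_ Hr1]. destruct (rep_spec Z v Hav) as [_ Hr2].
      destruct Hu as [Hu _]. destruct Hv as [Hv _]. rewrite Hu in Hr1. rewrite Hv in Hr2.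
      rewrite Hr1, Hr2. intro; subst; tauto. }
  assert (Hlub := Rsup_lub (fun s => exists E, SepSet Z n eps E /\ s = sumR (h n) E)).
  destruct Hlub as [Hl1 Hl2].
  - exists Zp. exists (E0 Z (words a n)); split; auto.
  - exists (M * INR (length (words a j)) * Zp). intros s [E [HE ->]]. apply Hup; auto.
  - unfold Zsum. split.
    + apply Hl1. exists (E0 Z (words a n)); split; auto.
    + apply Hl2. intros s [E [HE ->]]. apply Hup; auto.
Qed.


Lemma INR_pos n : (1 <= n)%nat -> 0 < INR n.
Proof. intro; apply lt_0_INR; lia. Qed.

Lemma fekete (a : nat -> R) A B :
  (forall n m, (1 <= n)%nat -> (1 <= m)%nat -> a (n + m)%nat <= a n + a m + A) ->
  (forall n m, (1 <= n)%nat -> (1 <= m)%nat -> a n + a m - B <= a (n + m)%nat) ->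
  exists P, forall n, (1 <= n)%nat -> INR n * P - A <= a n <= INR n * P + B.
Proof.
  intros H1 H2.
  assert (HAB : 0 <= A + B) by (specialize (H1 1%nat 1%nat (le_n 1) (le_n 1)); specialize (H2 1%nat 1%nat (le_n 1) (le_n 1)); lra).
  set (c := fun n => a n + A). set (d := fun n => a n - B).
  assert (Hc : forall n q, (1 <= n)%nat -> c (S q * n)%nat <= INR (S q) * c n).
  { intros n q Hn. induction q. simpl. rewrite Nat.add_0_r. lra.
    replace (S (S q) * n)%nat with (n + S q * n)%nat by lia. rewrite S_INR.
    assert (c (n + S q * n)%nat <= c n + c (S q * n)%nat).
    { unfold c. specialize (H1 n (S q * n)%nat Hn). assert (1 <= S q * n)%nat by nia. specialize (H1 H). lra. }
    lra. }
  assert (Hd : forall n q, (1 <= n)%nat -> INR (S q) * d n <= d (S q * n)%nat).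
  { intros n q Hn. induction q. simpl. rewrite Nat.add_0_r. lra.
    replace (S (S q) * n)%nat with (n + S q * n)%nat by lia. rewrite S_INR.
    assert (d n + d (S q * n)%nat <= d (n + S q * n)%nat).
    { unfold d. specialize (H2 n (S q * n)%nat Hn). assert (1 <= S q * n)%nat by nia. specialize (H2 H). lra. }
    lra. }
  assert (Hdc : forall n m, (1 <= n)%nat -> (1 <= m)%nat -> INR m * d n <= INR n * c m).
  { intros n m Hn Hm. destruct m as [|m]; [lia|]. destruct n as [|n]; [lia|].
    specialize (Hd (S n) m Hn). specialize (Hc (S m) n Hm).
    replace (S n * S m)%nat with (S m * S n)%nat in Hc by lia.
    assert (d (S m * S n)%nat <= c (S m * S n)%nat) by (unfold c, d; lra). lra. }
  set (S := fun r => exists m, (1 <= m)%nat /\ r = - (c m / INR m)).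
  destruct (completeness S) as [l [Hl1 Hl2]].
  - exists (- d 1%nat). intros r [m [Hm ->]]. specialize (Hdc 1%nat m (le_n 1) Hm).
    assert (0 < INR m) by (apply INR_pos; auto). simpl INR in Hdc.
    apply Ropp_le_contravar. apply Rmult_le_reg_r with (INR m); auto. unfold Rdiv.
    rewrite Rmult_assoc, Rinv_l by lra. lra.
  - exists (- (c 1%nat / INR 1)). exists 1%nat; split; auto.
  - exists (- l). intros n Hn. assert (Hnp : 0 < INR n) by (apply INR_pos; auto).
    assert (HP1 : - l <= c n / INR n).
    { assert (- (c n / INR n) <= l) by (apply Hl1; exists n; split; auto). lra. }
    assert (HP2 : d n / INR n <= - l).
    { assert (l <= - (d n / INR n)); [|lra]. apply Hl2. intros r [m [Hm ->]].
      assert (0 < INR m) by (apply INR_pos; auto). specialize (Hdc n m Hn Hm).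
      apply Ropp_le_contravar.
      assert (Q1 : d n / INR n = (INR m * d n) / (INR n * INR m)) by (field; lra).
      assert (Q2 : c m / INR m = (INR n * c m) / (INR n * INR m)) by (field; lra).
      rewrite Q1, Q2. unfold Rdiv. apply Rmult_le_compat_r; auto.
      left; apply Rinv_0_lt_compat; nra. }
    assert (E1 : INR n * (- l) <= c n).
    { apply Rmult_le_compat_l with (r := INR n) in HP1; [|lra].
      replace (INR n * (c n / INR n)) with (c n) in HP1 by (field; lra). lra. }
    assert (E2 : d n <= INR n * (- l)).
    { apply Rmult_le_compat_l with (r := INR n) in HP2; [|lra].
      replace (INR n * (d n / INR n)) with (d n) in HP2 by (field; lra). lra. }
    unfold c, d in *. lra.
Qed.

Lemma ln_le x y : 0 < x -> x <= y -> ln x <= ln y.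
Proof. intros Hx [H|H]. left; apply ln_increasing; auto. subst; lra. Qed.

Lemma limsup_of_bounds (u : nat -> R) P al be : 0 < al -> 0 < be ->
  (forall n, (1 <= n)%nat -> al * exp (INR n * P) <= u n <= be * exp (INR n * P)) ->
  IsLimsup (fun n => ln (u n) / INR n) P.
Proof.
  intros Hal Hbe H.
  set (K := Rabs (ln al) + Rabs (ln be)).
  assert (Hb : forall n, (1 <= n)%nat -> Rabs (ln (u n) / INR n - P) <= K / INR n).
  { intros n Hn. specialize (H n Hn). assert (Hnp : 0 < INR n) by (apply INR_pos; auto).
    assert (He : 0 < exp (INR n * P)) by apply exp_pos.
    assert (Hu : 0 < u n) by nra.
    assert (L1 : ln al + INR n * P <= ln (u n)).
    { rewrite <- (ln_exp (INR n * P)), <- ln_mult by auto. apply ln_le; nra. }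
    assert (L2 : ln (u n) <= ln be + INR n * P).
    { rewrite <- (ln_exp (INR n * P)), <- ln_mult by auto. apply ln_le; nra. }
    assert (Q : ln (u n) / INR n - P = (ln (u n) - INR n * P) / INR n) by (field; lra).
    rewrite Q. unfold Rdiv. rewrite Rabs_mult, (Rabs_right (/ INR n)) by (left; apply Rinv_0_lt_compat; auto).
    apply Rmult_le_compat_r. left; apply Rinv_0_lt_compat; auto.
    unfold K. apply Rabs_le. split.
    - assert (- Rabs (ln al) <= ln al) by (rewrite <- Rabs_Ropp; pose proof (RRle_abs (- ln al)); lra). pose proof (Rabs_pos (ln be)). lra.
    - assert (ln be <= Rabs (ln be)) by apply RRle_abs. pose proof (Rabs_pos (ln al)). lra. }
  intros dd Hdd.
  destruct (INR_archimed dd K) as [N HN]; [lra|].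
  assert (HK : 0 <= K) by (unfold K; pose proof (Rabs_pos (ln al)); pose proof (Rabs_pos (ln be)); lra).
  assert (Hfin : forall n, (Nat.max N 1 <= n)%nat -> Rabs (ln (u n) / INR n - P) < dd).
  { intros n Hn. assert (Hn1 : (1 <= n)%nat) by lia. eapply Rle_lt_trans; [apply Hb; auto|].
    assert (Hnp : 0 < INR n) by (apply INR_pos; auto).
    assert (INR N <= INR n) by (apply le_INR; lia).
    apply Rmult_lt_reg_r with (INR n); auto. unfold Rdiv. rewrite Rmult_assoc, Rinv_l by lra. nra. }
  split.
  - intros N0. exists (Nat.max N0 (Nat.max N 1)). split; [lia|].
    specialize (Hfin (Nat.max N0 (Nat.max N 1)) ltac:(lia)). apply Rabs_def2 in Hfin. lra.
  - exists (Nat.max N 1). intros n Hn. specialize (Hfin n Hn). apply Rabs_def2 in Hfin. lra.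
Qed.


Definition Zn k (X : pt -> Prop) (f : nat -> pt -> R) n :=
  sumR (fun u => ind (Allowed X u) (f n (rep X u))) (words k n).

Lemma f_pos X f n x : Potential X f -> X x -> 0 < f n x.
Proof. intros HP Hx. apply (HP n x Hx). Qed.

Lemma Zn_term_nonneg X f n u : Potential X f -> 0 <= ind (Allowed X u) (f n (rep X u)).
Proof. intro HP. apply ind_nonneg. intro Ha. left. apply (f_pos X f n); auto. apply rep_spec; auto. Qed.

Lemma Zn_pos k X f n : Subshift k X -> Potential X f -> 0 < Zn k X f n.
Proof. intros HS HP. destruct HS as [[x0 Hx0] HS'].
  assert (HS : Subshift k X) by (split; [exists x0|]; auto).
  eapply Rlt_le_trans; [|apply (sumR_ge_term _ _ (prefix n x0))].
  - cbv beta. rewrite ind_T by (apply allowed_prefix; auto). apply (f_pos X f); auto. apply rep_spec, allowed_prefix; auto.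
  - intros; apply Zn_term_nonneg; auto.
  - eapply sub_prefix_words; eauto. Qed.

Lemma BV_ge1 X f M : Subshift 0 X \/ True -> (exists x, X x) -> Potential X f ->
  (forall n, (1 <= n)%nat -> forall x x', X x -> X x' -> prefix n x = prefix n x' -> f n x <= M * f n x') -> 1 <= M.
Proof. intros _ [x Hx] HP HM. specialize (HM 1%nat (le_n 1) x x Hx Hx eq_refl).
  assert (0 < f 1%nat x) by (apply (f_pos X f); auto). destruct (Rle_lt_dec 1 M); auto.
  nra. Qed.

Lemma split_pt X n m u1 u2 : (forall x, X x -> X (shiftn n x)) -> length u1 = n -> length u2 = m ->
  Allowed X (u1 ++ u2) ->
  let x := rep X (u1 ++ u2) in
  X x /\ prefix n x = u1 /\ prefix m (shiftn n x) = u2 /\ X (shiftn n x).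
Proof. intros Hsh H1 H2 Ha x. destruct (rep_spec X _ Ha) as [Hx Hp].
  rewrite length_app, H1, H2, prefix_app in Hp. apply app_inv_len in Hp; [|rewrite prefix_length; auto].
  destruct Hp; repeat split; auto. Qed.

Lemma Z_upper k X f M C n m : Subshift k X -> Potential X f -> 0 < C ->
  (forall x, X x -> forall n m, (1 <= n)%nat -> (1 <= m)%nat ->
      f (n + m)%nat x <= exp C * f n x * f m (shiftn n x)) ->
  (forall n, (1 <= n)%nat -> forall x x', X x -> X x' -> prefix n x = prefix n x' -> f n x <= M * f n x') ->
  (1 <= n)%nat -> (1 <= m)%nat ->
  Zn k X f (n + m) <= (exp C * M * M) * Zn k X f n * Zn k X f m.
Proof.
  intros HS HP HC HAA HM Hn Hm.
  assert (HM1 : 1 <= M) by (eapply BV_ge1; eauto; apply HS).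
  assert (Hsh : forall x, X x -> X (shiftn n x)) by (intros; eapply sub_shiftn; eauto).
  unfold Zn. rewrite sumR_words_split.
  match goal with |- _ <= ?K * sumR ?g1 ?l1 * sumR ?g2 ?l2 =>
    replace (K * sumR g1 l1 * sumR g2 l2) with (sumR (fun a => sumR (fun b => (K * g1 a) * g2 b) l2) l1)
    by (rewrite sumR_prod, sumR_scal; ring) end.
  apply sumR_le_in; intros u1 Hu1. apply sumR_le_in; intros u2 Hu2.
  apply in_words in Hu1; apply in_words in Hu2. destruct Hu1 as [Hl1 _], Hu2 as [Hl2 _].
  destruct (classic (Allowed X (u1 ++ u2))) as [Ha|Ha].
  - destruct (split_pt X n m u1 u2 Hsh Hl1 Hl2 Ha) as [Hx [Hp1 [Hp2 Hx']]].
    set (x := rep X (u1 ++ u2)) in *.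
    assert (A1 : Allowed X u1) by (eapply allowed_app; eauto).
    assert (A2 : Allowed X u2) by (rewrite <- Hp2; apply allowed_prefix; auto).
    rewrite !ind_T by auto.
    destruct (rep_spec X u1 A1) as [R1 P1]. destruct (rep_spec X u2 A2) as [R2 P2].
    rewrite Hl1 in P1. rewrite Hl2 in P2.
    assert (B1 : f n x <= M * f n (rep X u1)) by (apply HM; auto; congruence).
    assert (B2 : f m (shiftn n x) <= M * f m (rep X u2)) by (apply HM; auto; congruence).
    assert (B0 := HAA x Hx n m Hn Hm).
    assert (0 < f n x) by (apply (f_pos X f); auto).
    assert (0 < f m (shiftn n x)) by (apply (f_pos X f); auto).
    assert (0 < exp C) by apply exp_pos.
    eapply Rle_trans; [exact B0|].
    replace (exp C * M * M * f n (rep X u1) * f m (rep X u2)) with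
      (exp C * ((M * f n (rep X u1)) * (M * f m (rep X u2)))) by ring.
    rewrite Rmult_assoc. apply Rmult_le_compat_l; [lra|].
    apply Rmult_le_compat; lra.
  - rewrite ind_F by auto. assert (0 <= exp C) by (left; apply exp_pos).
    pose proof (Zn_term_nonneg X f n u1 HP). pose proof (Zn_term_nonneg X f m u2 HP).
    assert (0 <= exp C * M * M) by (apply Rmult_le_pos; [apply Rmult_le_pos|]; lra).
    apply Rmult_le_pos; auto. apply Rmult_le_pos; auto.
Qed.

Lemma Z_lower k X f M C p : Subshift k X -> Potential X f -> 0 < C ->
  (forall x, X x -> forall n m, (1 <= n)%nat -> (1 <= m)%nat ->
      exp (- C) * f n x * f m (shiftn n x) <= f (n + m)%nat x) ->
  (forall n, (1 <= n)%nat -> forall x x', X x -> X x' -> prefix n x = prefix n x' -> f n x <= M * f n x') ->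
  (0 < p)%nat ->
  (forall u v, Allowed X u -> Allowed X v -> exists w, length w = p /\ Allowed X (u ++ w ++ v)) ->
  exists c0, 0 < c0 /\ forall n m, (1 <= n)%nat -> (1 <= m)%nat ->
    c0 * Zn k X f n * Zn k X f m <= Zn k X f (n + (p + m)).
Proof.
  intros HS HP HC HAA HM Hp Hspec.
  assert (HM1 : 1 <= M) by (eapply BV_ge1; eauto; apply HS).
  destruct (pos_min (Allowed X) (fun u => f p (rep X u)) (words k p)) as [dl [Hdl Hdl']].
  { intros u _ Ha. apply (f_pos X f); [exact HP|]; apply rep_spec; auto. }
  assert (Hfp : forall y, X y -> dl / M <= f p y).
  { intros y Hy. destruct (rep_prefix X p y Hy) as [Hr Hpr].
    assert (dl <= f p (rep X (prefix p y))).
    { apply (Hdl' (prefix p y)). eapply sub_prefix_words; eauto. apply allowed_prefix; auto. }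
    assert (f p (rep X (prefix p y)) <= M * f p y) by (apply HM; auto; lia).
    apply Rmult_le_reg_r with M; [lra|]. unfold Rdiv. rewrite Rmult_assoc, Rinv_l by lra. lra. }
  set (c0 := exp (- C) * exp (- C) * (dl / M) / (M * M)).
  assert (Hc0 : 0 < c0).
  { unfold c0. assert (0 < exp (-C)) by apply exp_pos. assert (0 < dl / M) by (apply Rdiv_lt_0_compat; lra).
    apply Rdiv_lt_0_compat; [|nra]. apply Rmult_lt_0_compat; [apply Rmult_lt_0_compat|]; auto. }
  exists c0; split; auto. intros n m Hn Hm.
  unfold Zn. rewrite sumR_words_split.
  match goal with |- ?K * sumR ?g1 ?l1 * sumR ?g2 ?l2 <= _ =>
    replace (K * sumR g1 l1 * sumR g2 l2) with (sumR (fun a => sumR (fun b => (K * g1 a) * g2 b) l2) l1)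
    by (rewrite sumR_prod, sumR_scal; ring) end.
  apply sumR_le_in; intros u1 Hu1. rewrite sumR_words_split. rewrite sumR_swap.
  apply sumR_le_in; intros u2 Hu2.
  apply in_words in Hu1; apply in_words in Hu2. destruct Hu1 as [Hl1 _], Hu2 as [Hl2 _].
  destruct (classic (Allowed X u1 /\ Allowed X u2)) as [[A1 A2]|Hna].
  - destruct (Hspec u1 u2 A1 A2) as [w [Hw Ha]].
    assert (Hsh : forall j x, X x -> X (shiftn j x)) by (intros; eapply sub_shiftn; eauto).
    destruct (split_pt X n (p + m) u1 (w ++ u2) (Hsh n) Hl1) as [Hx [Hp1 [Hp2 Hx']]];
      [rewrite length_app; lia|auto|].
    set (x := rep X (u1 ++ w ++ u2)) in *.
    rewrite prefix_app in Hp2. apply app_inv_len in Hp2; [|rewrite prefix_length; auto].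
    destruct Hp2 as [Hpw Hpu2]. rewrite shiftn_add in Hpu2.
    assert (Hwin : In w (words k p)) by (rewrite <- Hpw; eapply sub_prefix_words; eauto).
    eapply Rle_trans; [|apply (sumR_ge_term _ _ w)]; auto.
    2: { intros b _. apply Zn_term_nonneg; auto. }
    cbv beta. rewrite !ind_T by auto.
    destruct (rep_spec X u1 A1) as [R1 P1]. destruct (rep_spec X u2 A2) as [R2 P2].
    rewrite Hl1 in P1. rewrite Hl2 in P2.
    assert (B1 : f n (rep X u1) <= M * f n x) by (apply HM; auto; congruence).
    assert (B2 : f m (rep X u2) <= M * f m (shiftn (n + p) x)) by (apply HM; auto; congruence).
    assert (B3 : dl / M <= f p (shiftn n x)) by (apply Hfp; auto).
    assert (E1 := HAA x Hx n (p + m)%nat Hn ltac:(lia)).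
    assert (E2 := HAA (shiftn n x) Hx' p m ltac:(lia) Hm). rewrite shiftn_add in E2.
    assert (0 < f n (rep X u1)) by (apply (f_pos X f); auto).
    assert (0 < f m (rep X u2)) by (apply (f_pos X f); auto).
    assert (0 < f n x) by (apply (f_pos X f); auto).
    assert (0 < f m (shiftn (n + p) x)) by (apply (f_pos X f); auto).
    assert (0 < f p (shiftn n x)) by (apply (f_pos X f); auto).
    assert (Hec : 0 < exp (-C)) by apply exp_pos.
    assert (0 < dl / M) by (apply Rdiv_lt_0_compat; lra).
    assert (Q1 : f n (rep X u1) * f m (rep X u2) <= (M * M) * (f n x * f m (shiftn (n + p) x))).
    { replace ((M * M) * (f n x * f m (shiftn (n + p) x))) with ((M * f n x) * (M * f m (shiftn (n + p) x))) by ring.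
      apply Rmult_le_compat; lra. }
    assert (Q2 : exp (-C) * exp (-C) * (dl / M) * (f n x * f m (shiftn (n + p) x)) <= f (n + (p + m))%nat x).
    { eapply Rle_trans; [|exact E1].
      replace (exp (- C) * exp (- C) * (dl / M) * (f n x * f m (shiftn (n + p) x))) with
        (exp (-C) * f n x * (exp (-C) * (dl / M) * f m (shiftn (n + p) x))) by ring.
      apply Rmult_le_compat_l. nra. eapply Rle_trans; [|exact E2].
      apply Rmult_le_compat_r; [lra|]. apply Rmult_le_compat_l; lra. }
    assert (Q3 : / (M * M) * (f n (rep X u1) * f m (rep X u2)) <= f n x * f m (shiftn (n + p) x)).
    { apply Rmult_le_reg_l with (M * M); [nra|]. rewrite <- Rmult_assoc, Rinv_r, Rmult_1_l by nra. lra. }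
    replace (c0 * f n (rep X u1) * f m (rep X u2)) with
      (exp (- C) * exp (- C) * (dl / M) * (/ (M * M) * (f n (rep X u1) * f m (rep X u2))))
      by (unfold c0, Rdiv; ring).
    eapply Rle_trans; [|exact Q2]. apply Rmult_le_compat_l; [|exact Q3].
    assert (0 < exp (- C) * exp (- C)) by nra. nra.
  - assert (Hz : c0 * ind (Allowed X u1) (f n (rep X u1)) * ind (Allowed X u2) (f m (rep X u2)) = 0).
    { destruct (classic (Allowed X u1)) as [A1|A1].
      - rewrite (ind_F (Allowed X u2)) by tauto. ring.
      - rewrite (ind_F (Allowed X u1)) by tauto. ring. }
    rewrite Hz. apply sumR_nonneg. intros; apply Zn_term_nonneg; auto.
Qed.


Lemma exp_le' x y : x <= y -> exp x <= exp y.
Proof. intros [H|H]. left; apply exp_increasing; auto. subst; lra. Qed.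

Lemma X_main k X f M : Subshift k X -> Specification X -> Potential X f -> AlmostAdditive X f ->
  (forall n, (1 <= n)%nat -> forall x x', X x -> X x' -> prefix n x = prefix n x' -> f n x <= M * f n x') ->
  exists P lo hi, 0 < lo /\ 0 < hi /\ forall n, (1 <= n)%nat ->
    lo * exp (INR n * P) <= Zn k X f n <= hi * exp (INR n * P).
Proof.
  intros HS [p [Hp Hspec]] HP [C [HC HAA]] HM.
  assert (HM1 : 1 <= M) by (eapply BV_ge1; eauto; apply HS).
  assert (Hup : forall n m, (1 <= n)%nat -> (1 <= m)%nat ->
      Zn k X f (n + m) <= (exp C * M * M) * Zn k X f n * Zn k X f m).
  { intros n m Hn Hm. apply Z_upper; auto. intros x Hx n' m' Hn' Hm'. apply HAA; auto. }
  destruct (Z_lower k X f M C p) as [c0 [Hc0 Hlo]]; auto.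
  { intros x Hx n' m' Hn' Hm'. apply HAA; auto. }
  set (U := exp C * M * M).
  assert (HU : 0 < U) by (unfold U; pose proof (exp_pos C); apply Rmult_lt_0_compat; [apply Rmult_lt_0_compat|]; lra).
  assert (HZ : forall n, 0 < Zn k X f n) by (intro; apply Zn_pos; auto).
  set (Dd := U * Zn k X f p / c0).
  assert (HD : 0 < Dd) by (unfold Dd; apply Rdiv_lt_0_compat; auto; apply Rmult_lt_0_compat; auto).
  assert (Hlow : forall n m, (1 <= n)%nat -> (1 <= m)%nat ->
      Zn k X f n * Zn k X f m <= Dd * Zn k X f (n + m)).
  { intros n m Hn Hm. specialize (Hlo n m Hn Hm).
    replace (n + (p + m))%nat with ((n + m) + p)%nat in Hlo by lia.
    assert (H2 := Hup (n + m)%nat p ltac:(lia) ltac:(lia)).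
    apply Rmult_le_reg_l with c0; auto. unfold Dd.
    replace (c0 * (U * Zn k X f p / c0 * Zn k X f (n + m))) with (U * Zn k X f (n + m) * Zn k X f p)
      by (field; lra). fold U in H2. lra. }
  destruct (fekete (fun n => ln (Zn k X f n)) (ln U) (ln Dd)) as [P HPb].
  - intros n m Hn Hm. cbv beta.
    rewrite <- (ln_mult (Zn k X f n) (Zn k X f m)) by auto.
    rewrite <- (ln_mult (Zn k X f n * Zn k X f m) U) by first [exact HU | apply Rmult_lt_0_compat; auto].
    apply ln_le; auto. specialize (Hup n m Hn Hm). fold U in Hup. lra.
  - intros n m Hn Hm. cbv beta. assert (ln (Zn k X f n) + ln (Zn k X f m) <= ln Dd + ln (Zn k X f (n + m))); [|lra].
    rewrite <- (ln_mult (Zn k X f n) (Zn k X f m)) by auto.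
    rewrite <- (ln_mult Dd (Zn k X f (n + m))) by auto.
    apply ln_le; [apply Rmult_lt_0_compat; auto|]. apply Hlow; auto.
  - exists P, (/ U), Dd. split; [apply Rinv_0_lt_compat; auto|]. split; auto.
    intros n Hn. specialize (HPb n Hn). cbv beta in HPb. destruct HPb as [B1 B2].
    rewrite <- (exp_ln (Zn k X f n)) by auto.
    rewrite <- (exp_ln U) at 1 by auto. rewrite <- (exp_ln Dd) at 1 by auto.
    rewrite <- exp_Ropp, <- !exp_plus. split; apply exp_le'; lra.
Qed.


Definition Gw k X Phi f n w := sumR (fun u => ind (Wset X Phi n w u) (f n (rep X u))) (words k n).

Lemma Gw_nonneg k X Phi f n w : Potential X f -> 0 <= Gw k X Phi f n w.
Proof. intro HP. apply sumR_nonneg. intros u _. apply ind_nonneg. intros [Ha _]. left.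
  apply (f_pos X f); auto. apply rep_spec; auto. Qed.

Lemma gword_bounds k X Phi f M n w : Potential X f -> (1 <= n)%nat ->
  (forall n, (1 <= n)%nat -> forall x x', X x -> X x' -> prefix n x = prefix n x' -> f n x <= M * f n x') ->
  Gw k X Phi f n w <= gword k X Phi f n w <= M * Gw k X Phi f n w.
Proof.
  intros HP Hn HM.
  set (S := fun s => exists c : list nat -> pt,
    (forall u, Wset X Phi n w u -> X (c u) /\ prefix n (c u) = u) /\
    s = sumR (fun u => ind (Wset X Phi n w u) (f n (c u))) (words k n)).
  assert (Hin : S (Gw k X Phi f n w)).
  { exists (rep X). split; auto. intros u [Ha [Hl _]]. rewrite <- Hl. apply rep_spec; auto. }
  assert (Hb : forall s, S s -> s <= M * Gw k X Phi f n w).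
  { intros s [c [Hc ->]]. unfold Gw. rewrite <- sumR_scal. apply sumR_le_in. intros u _.
    destruct (classic (Wset X Phi n w u)) as [Hw|Hw].
    - rewrite !ind_T by auto. destruct (Hc u Hw) as [Hcx Hcp]. destruct Hw as [Ha [Hl _]].
      destruct (rep_spec X u Ha) as [Hr Hrp]. rewrite Hl in Hrp. apply HM; auto. congruence.
    - rewrite !ind_F by auto. lra. }
  assert (HL : is_lub S (Rsup S)) by (apply Rsup_lub; eauto). destruct HL as [H1 H2].
  unfold gword. fold S. split; [apply H1; auto|apply H2; auto]. Qed.

Lemma T_eq k l X Y Phi f n : Subshift k X -> Subshift l Y -> OneBlockFactor X Y Phi ->
  sumR (fun w => ind (Allowed Y w) (Gw k X Phi f n w)) (words l n) = Zn k X f n.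
Proof.
  intros HSX HSY [HXY _]. unfold Gw, Zn.
  rewrite (sumR_ext_in _ (fun w => sumR (fun u => ind (Allowed Y w /\ Wset X Phi n w u) (f n (rep X u))) (words k n))).
  2: { intros w _. destruct (classic (Allowed Y w)) as [Hy|Hy].
       - rewrite ind_T by auto. apply sumR_ext_in. intros u _. unfold ind.
         repeat destruct excluded_middle_informative; tauto.
       - rewrite ind_F by auto. rewrite (sumR_ext_in _ (fun _ => 0)). rewrite sumR_const; lra.
         intros u _. apply ind_F. tauto. }
  rewrite sumR_swap. apply sumR_ext_in. intros u Hu. apply in_words in Hu. destruct Hu as [Hlu _].
  rewrite (sumR_unique _ _ (map Phi u)).
  - destruct (classic (Allowed X u)) as [Ha|Ha].
    + rewrite (ind_T (Allowed X u)) by auto. apply ind_T. destruct Ha as [x0 [Hx0 Hp0]]. rewrite Hlu in Hp0. split.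
      * exists (blockmap Phi x0). split; auto. rewrite length_map, Hlu, prefix_blockmap, Hp0; auto.
      * split; [exists x0; rewrite Hlu; auto|split; auto]. intros x Hx Hpx. rewrite prefix_blockmap, Hpx; auto.
    + rewrite !ind_F; auto. intros [_ [Hw _]]; tauto.
  - apply NoDup_words.
  - intros w [_ [[x0 [Hx0 Hp0]] [Hl Hw]]]. rewrite Hl in Hp0. rewrite <- (Hw x0 Hx0 Hp0), prefix_blockmap, Hp0; auto.
  - intros [[y [Hy Hpy]] _]. rewrite <- Hpy. rewrite length_map, Hlu. eapply sub_prefix_words; eauto.
Qed.


Lemma small_pow eps : 0 < eps -> exists j, (/2) ^ j <= eps.
Proof. intro He. destruct (pow_lt_1_zero (/2)) with (y := eps) as [N HN]; auto.
  rewrite Rabs_right; lra. exists N. specialize (HN N (le_n N)).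
  rewrite Rabs_right in HN. lra. apply Rle_ge, pow_le; lra. Qed.

Lemma words_len_pos k X j : Subshift k X -> 0 < INR (length (words k j)).
Proof. intros HS. destruct HS as [[x0 Hx0] HS'].
  assert (HS : Subshift k X) by (split; [exists x0|]; auto).
  assert (Hin := sub_prefix_words k X j x0 HS Hx0).
  destruct (words k j); [destruct Hin|]. simpl length. rewrite S_INR. pose proof (pos_INR (length l0)). lra. Qed.

Theorem lemma3p8 (k l : nat) (X Y : pt -> Prop) (Phi : nat -> nat)
  (f : nat -> pt -> R) :
  Subshift k X -> Subshift l Y -> OneBlockFactor X Y Phi ->
  Specification X ->
  Potential X f -> AlmostAdditive X f -> BoundedVariation X f ->
  exists PX, Pressure X f PX /\
  exists PY, Pressure Y (gtilde k X Phi f PX) PY /\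
  exists K1 K2, 0 < K1 /\ 0 < K2 /\
    forall n, (1 <= n)%nat ->
      K1 <= exp (INR n * PY) / Ssum k l X Y Phi f PX n <= K2.
Proof.
  intros HSX HSY HF Hspec HP HAA [M HM].
  assert (HM1 : 1 <= M) by (apply (BV_ge1 X f M (or_intror I)); [apply HSX|exact HP|exact HM]).
  destruct (X_main k X f M HSX Hspec HP HAA HM) as [P [lo [hi [Hlo [Hhi HZ]]]]].
  assert (HSs : forall n, (1 <= n)%nat -> lo <= Ssum k l X Y Phi f P n <= M * hi).
  { intros n Hn. specialize (HZ n Hn). assert (He : 0 < exp (- (INR n * P))) by apply exp_pos.
    assert (Hee : exp (INR n * P) * exp (- (INR n * P)) = 1) by (rewrite <- exp_plus, Rplus_opp_r, exp_0; auto).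
    assert (HT := T_eq k l X Y Phi f n HSX HSY HF).
    assert (Lb : sumR (fun w => ind (Allowed Y w) (Gw k X Phi f n w)) (words l n) * exp (- (INR n * P))
                  <= Ssum k l X Y Phi f P n).
    { unfold Ssum.
      replace (sumR (fun w => ind (Allowed Y w) (Gw k X Phi f n w)) (words l n) * exp (- (INR n * P))) with
        (sumR (fun w => exp (- (INR n * P)) * ind (Allowed Y w) (Gw k X Phi f n w)) (words l n))
        by (rewrite sumR_scal; ring).
      apply sumR_le_in. intros w _. unfold ind.
      destruct excluded_middle_informative; [|lra].
      destruct (gword_bounds k X Phi f M n w HP Hn HM). nra. }
    assert (Ub : Ssum k l X Y Phi f P n <=
                 M * (sumR (fun w => ind (Allowed Y w) (Gw k X Phi f n w)) (words l n) * exp (- (INR n * P)))).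
    { unfold Ssum.
      replace (M * (sumR (fun w => ind (Allowed Y w) (Gw k X Phi f n w)) (words l n) * exp (- (INR n * P)))) with
        (sumR (fun w => M * (exp (- (INR n * P)) * ind (Allowed Y w) (Gw k X Phi f n w))) (words l n))
        by (rewrite sumR_scal, sumR_scal; ring).
      apply sumR_le_in. intros w _. unfold ind.
      destruct excluded_middle_informative; [|lra].
      destruct (gword_bounds k X Phi f M n w HP Hn HM). nra. }
    rewrite HT in Lb, Ub. destruct HZ as [Z1 Z2]. split. { apply Rle_trans with (Zn k X f n * exp (- (INR n * P))); auto. replace lo with (lo * exp (INR n * P) * exp (- (INR n * P))) by (rewrite Rmult_assoc, Hee; ring). apply Rmult_le_compat_r; lra. } { apply Rle_trans with (M * (Zn k X f n * exp (- (INR n * P)))); auto. apply Rmult_le_compat_l; [lra|]. replace hi with (hi * exp (INR n * P) * exp (- (INR n * P))) by (rewrite Rmult_assoc, Hee; ring). apply Rmult_le_compat_r; lra. } }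
  assert (Hgt : forall n y, (1 <= n)%nat -> 0 <= gtilde k X Phi f P n y).
  { intros n y Hn. unfold gtilde. destruct (gword_bounds k X Phi f M n (prefix n y) HP Hn HM).
    pose proof (Gw_nonneg k X Phi f n (prefix n y) HP). pose proof (exp_pos (- (INR n * P))). nra. }
  exists P. split.
  - intros d Hd. exists 1. split; [lra|]. intros eps Heps. destruct (small_pow eps) as [j Hj]; [lra|].
    exists P. split; [|rewrite Rminus_diag, Rabs_R0; lra].
    apply (limsup_of_bounds _ P lo (M * INR (length (words k j)) * hi)); auto.
    { pose proof (words_len_pos k X j HSX). apply Rmult_lt_0_compat; auto. apply Rmult_lt_0_compat; lra. }
    intros n Hn. destruct (zsum_bounds k X f M n eps j) as [B1 B2]; auto; try lra.
    + intros x Hx. left; apply (f_pos X f); auto.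
    + intros x Hx. destruct (rep_prefix X n x Hx). apply HM; auto.
    + specialize (HZ n Hn). fold (Zn k X f n) in B1, B2. split; [lra|].
      pose proof (words_len_pos k X j HSX).
      eapply Rle_trans; [exact B2|]. rewrite !Rmult_assoc. apply Rmult_le_compat_l; [lra|].
      apply Rmult_le_compat_l; lra.
  - exists 0. split.
    + intros d Hd. exists 1. split; [lra|]. intros eps Heps. destruct (small_pow eps) as [j Hj]; [lra|].
      exists 0. split; [|rewrite Rminus_diag, Rabs_R0; lra].
      apply (limsup_of_bounds _ 0 lo (INR (length (words l j)) * (M * hi))); auto.
      { pose proof (words_len_pos l Y j HSY). apply Rmult_lt_0_compat; [lra|apply Rmult_lt_0_compat; lra]. }
      intros n Hn. rewrite Rmult_0_r, exp_0, !Rmult_1_r.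
      destruct (zsum_bounds l Y (gtilde k X Phi f P) 1 n eps j) as [B1 B2]; auto; try lra.
      * intros x Hx. destruct (rep_prefix Y n x Hx) as [_ Hp]. unfold gtilde. rewrite Hp. lra.
      * assert (HZp : sumR (fun u => ind (Allowed Y u) (gtilde k X Phi f P n (rep Y u))) (words l n)
                      = Ssum k l X Y Phi f P n).
        { unfold Ssum. apply sumR_ext_in. intros w Hw. destruct (classic (Allowed Y w)) as [Ha|Ha].
          - rewrite !ind_T by auto. unfold gtilde. destruct (rep_spec Y w Ha) as [_ Hp].
            apply in_words in Hw. destruct Hw as [Hl _]. rewrite Hl in Hp. rewrite Hp. auto.
          - rewrite !ind_F by auto. auto. }
        rewrite HZp in B1, B2. specialize (HSs n Hn). pose proof (words_len_pos l Y j HSY).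
        split; [lra|]. eapply Rle_trans; [exact B2|]. rewrite Rmult_1_l.
        apply Rmult_le_compat_l; lra.
    + exists (/ (M * hi)), (/ lo). split; [apply Rinv_0_lt_compat; nra|]. split; [apply Rinv_0_lt_compat; lra|].
      intros n Hn. specialize (HSs n Hn). rewrite Rmult_0_r, exp_0. unfold Rdiv. rewrite Rmult_1_l.
      split; apply Rinv_le_contravar; lra.
Qed.
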